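(* Let $A=(A[1],\dots,A[n])$ be an array of $n$ pairwise distinct real numbers and let $G$ be the corresponding graph of $A$ with reach one. Let $F$ be the resulting DFS forest of $G$ (for a visiting list that is some ordering of all vertices). Merge the sub-trees of $F$ and call the resulting graph $H'$. Let $H_1$ and $R_1$ be the graph and the root list produced by the merge step applied to $H'$ with the list of roots of $F$ (in some order), and let $F_1$ be the resulting DFS forest of $H_1$ with visiting list $R_1$. For $i>1$, let $H_i$ and $R_i$ be the graph and root list produced by the merge step applied to $F_{i-1}$ with root list $R_{i-1}$, and let $F_i$ be the resulting DFS forest of $H_i$ with visiting list $R_i$. Then there exists a finite $i$ such that $F_i$ is a directed Hamiltonian path on all $n$ vertices, and the topological sort of $F_i$ is the sequence of indices of the sorted array of $A$.
   Context: An array is a finite sequence $A=(A[1],\dots,A[n])$ of pairwise distinct real numbers. A comparison graph on $A$ is a directed graph with vertex set $\{1,\dots,n\}$ in which every arc $(u,v)$ satisfies $A[u]<A[v]$. The corresponding graph of $A$ with reach $r\ge1$ is the directed graph on $\{1,\dots,n\}$ having an arc $(i,j)$ for every $i\neq j$ with $A[i]<A[j]$ such that $j\equiv i+k$ or $j\equiv i-k \pmod n$ for some $1\le k\le r$ (indices cyclic). Components of a directed graph are the connected components of its underlying undirected graph. A directed Hamiltonian path of a graph (or of a component) is a directed path visiting each of its vertices exactly once. A topological sort of a directed acyclic graph is an ordering of all vertices such that every arc goes from an earlier to a later vertex. The sequence of indices of the sorted array of $A$ is the permutation $(\sigma_1,\dots,\sigma_n)$ of $\{1,\dots,n\}$ with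 $A[\sigma_1]<\dots<A[\sigma_n]$. DFS: adjacency lists are sorted in increasing order of $A$-value; given a visiting list $(l_1,\dots,l_m)$, for $t=1,\dots,m$, if $l_t$ is unvisited call Visit$(l_t)$, where Visit$(u)$ marks $u$ visited and, for each out-neighbour $w$ of $u$ in increasing order of $A[w]$ that is still unvisited, sets parent$(w)=u$ and calls Visit$(w)$. The resulting DFS forest is the directed graph on the same vertex set with arcs $(\mathrm{parent}(w),w)$; its roots are the vertices without parent. Merging the sub-trees of a DFS forest $F$ of the reach-one corresponding graph: for each component of $F$ whose root has exactly two children $a_1,b_1$, set $p=a_1$, $q=b_1$ and, while both $p,q$ are defined: if $A[p]<A[q]$ add the arc $(p,q)$ and replace $p$ by its smallest-valued child in $F$ (undefined if none); otherwise add the arc $(q,p)$ and replace $q$ by its smallest-valued child in $F$ (undefined if none). Component merge of two distinct components $C,D$ of a comparison graph: set $p,q$ to the minimum-valued vertices of $C,D$; while both are defined: if $A[p]<A[q]$ add the arc $(p,q)$ and replace $p$ by the smallest-valued out-neighbour of $p$ in $C$ (ignoring arcs added during this merge; undefined if none); otherwise add $(q,p)$ and replace $q$ analogously within $D$. Merge step: given a comparison graph whose components each have a minimum-valued vertex (its root) and a list $(\rho_1,\dots,\rho_k)$ of these roots, perform the component merge of the components of $\rho_{2j-1}$ and $\rho_{2j}$ for $j=1,\dots,\lfloor k/2\rfloor$, and return the new root list obtained from $(\rho_1,\dots,\rho_k)$ by deleting, from each merged pair, the root of larger value. *)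

(* Defs.v *)
(* Arrays are A : 'I_n -> R (0-based indices), graphs are
   boolean relations on a finite vertex type. *)
From HB Require Import structures.
From mathcomp Require Import all_boot all_order all_algebra.
From mathcomp Require Import reals.
Set Implicit Arguments. Unset Strict Implicit. Unset Printing Implicit Defensive.
Import Order.TTheory GRing.Theory Num.Theory.

Section Defs.
Variables (R : realDomainType) (T : finType) (A : T -> R).

Definition sort_by_val (s : seq T) : seq T := sort (fun x y => (A x <= A y)%R) s.
Definition min_by_val (s : seq T) : option T := ohead (sort_by_val s).

Definition out_nbrs (g : rel T) (u : T) : seq T := sort_by_val (enum [pred w | g u w]).

(* Visit(u): state = (visited set, parent function); k is fuel
   (#|T|.+1 always suffices since each nested call visits a new vertex). *)
Fixpoint visit (k : nat) (g : rel T) (st : {set T} * (T -> option T)) (u : T)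
  : {set T} * (T -> option T) :=
  match k with
  | 0 => st
  | k'.+1 =>
      foldl (fun (st' : {set T} * (T -> option T)) (w : T) =>
               if w \in st'.1 then st'
               else visit k' g (st'.1, fun x : T => if x == w then Some u else st'.2 x) w)
            (u |: st.1, st.2) (out_nbrs g u)
  end.

Definition dfs_parent (g : rel T) (l : seq T) : T -> option T :=
  (foldl (fun (st : {set T} * (T -> option T)) (r : T) => if r \in st.1 then st else visit #|T|.+1 g st r)
         (set0, fun _ : T => None) l).2.

Definition dfs_forest (g : rel T) (l : seq T) : rel T :=
  fun u w => dfs_parent g l w == Some u.

Definition is_root (F : rel T) (r : T) : bool := [forall u, ~~ F u r].

Definition add_arcs (g : rel T) (s : seq (T * T)) : rel T :=
  fun u v => g u v || ((u, v) \in s).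

(* the common while-loop of the two merge procedures: the successor of p is
   its smallest-valued out-neighbour in g (g = the graph before the merge,
   so arcs added during the merge are ignored). *)
Fixpoint merge_chain (k : nat) (g : rel T) (p q : T) : seq (T * T) :=
  match k with
  | 0 => [::]
  | k'.+1 =>
      if (A p < A q)%R then
        (p, q) :: (if min_by_val (enum [pred w | g p w]) is Some p'
                   then merge_chain k' g p' q else [::])
      else
        (q, p) :: (if min_by_val (enum [pred w | g q w]) is Some q'
                   then merge_chain k' g p q' else [::])
  end.

Definition children (F : rel T) (u : T) : seq T := sort_by_val (enum [pred w | F u w]).

Definition merge_subtrees (F : rel T) : rel T :=
  add_arcs F (flatten [seq (match children F r with
                            | [:: a; b] => merge_chain #|T|.+1 F a b
                            | _ => [::] end) | r <- enum T & is_root F r]).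

Definition ugraph (g : rel T) : rel T := fun u v => g u v || g v u.
Definition comp_min (g : rel T) (r : T) : T :=
  odflt r (min_by_val (enum [pred v | connect (ugraph g) r v])).

Fixpoint merge_arcs (g : rel T) (rs : seq T) : seq (T * T) :=
  match rs with
  | a :: b :: rs' => merge_chain #|T|.+1 g (comp_min g a) (comp_min g b) ++ merge_arcs g rs'
  | _ => [::]
  end.

Fixpoint merge_roots (rs : seq T) : seq T :=
  match rs with
  | a :: b :: rs' => (if (A a < A b)%R then a else b) :: merge_roots rs'
  | _ => rs
  end.

Definition merge_step (g : rel T) (rs : seq T) : rel T * seq T :=
  (add_arcs g (merge_arcs g rs), merge_roots rs).

(* iteration: state 0 = (H', R_0); state i+1 = (F_{i+1}, R_{i+1}) where
   (H_{i+1}, R_{i+1}) = merge_step (state i) and F_{i+1} = DFS of H_{i+1} from R_{i+1}. *)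
Fixpoint iter_state (X0 : rel T) (R0 : seq T) (i : nat) : rel T * seq T :=
  match i with
  | 0 => (X0, R0)
  | i'.+1 =>
      let st := iter_state X0 R0 i' in
      let ms := merge_step st.1 st.2 in
      (dfs_forest ms.1 ms.2, ms.2)
  end.

Definition is_ham_path_graph (F : rel T) (s : seq T) : Prop :=
  [/\ uniq s, (forall x, x \in s) & (forall u v, F u v = ((u, v) \in zip s (behead s)))].

Definition is_topsort (g : rel T) (t : seq T) : bool :=
  perm_eq t (enum T) && [forall u, forall v, g u v ==> (index u t < index v t)].

End Defs.

Definition corr_graph (R : realDomainType) (n : nat) (A : 'I_n -> R) (r : nat) : rel 'I_n :=
  fun i j => [&& i != j, (A i < A j)%R &
              [exists k : 'I_r, ((i + k.+1) %% n == j) || ((j + k.+1) %% n == i)]].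

(* Main.v *)
Require Import Defs.
From HB Require Import structures.
From mathcomp Require Import all_boot all_order all_algebra.
From mathcomp Require Import reals.
From mathcomp Require Import zify.
Set Implicit Arguments. Unset Strict Implicit. Unset Printing Implicit Defensive.
Import Order.TTheory GRing.Theory Num.Theory.

Section Basic.
Variables (R : realDomainType) (T : finType) (A : T -> R).
Hypothesis Ainj : injective A.

Local Notation ltA := (fun x y : T => (A x < A y)%R).

Lemma ltA_trans : transitive ltA.
Proof. by move=> y x z /= H1 H2; apply: lt_trans H2. Qed.

Lemma leA_total : total (fun x y : T => (A x <= A y)%R).
Proof. by move=> x y; apply: le_total. Qed.

Lemma leA_trans : transitive (fun x y : T => (A x <= A y)%R).
Proof. by move=> y x z /= H1 H2; apply: le_trans H2. Qed.

Lemma A_eq x y : A x = A y -> x = y.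
Proof. exact: Ainj. Qed.

Lemma leA_anti x y : (A x <= A y)%R -> (A y <= A x)%R -> x = y.
Proof. by move=> h1 h2; apply: Ainj; apply/eqP; rewrite eq_le h1 h2. Qed.

Lemma ltA_neq x y : (A x < A y)%R -> x != y.
Proof. by move=> h; apply/eqP => e; rewrite e ltxx in h. Qed.

Lemma not_ltA x y : x != y -> ~~ (A x < A y)%R -> (A y < A x)%R.
Proof.
move=> ne; rewrite -leNgt le_eqVlt => /orP [/eqP e|//].
by move: ne; rewrite (Ainj e) eqxx.
Qed.

Lemma path_le_lt x s : path (fun x y => (A x <= A y)%R) x s -> uniq (x :: s) -> path ltA x s.
Proof.
elim: s x => [//|y s IH] x /= /andP [hxy hp] /andP [hx hu].
rewrite IH // andbT lt_neqAle hxy andbT.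
apply/eqP => e; move: hx; rewrite (Ainj e) inE eqxx //.
Qed.

Lemma sort_val_sorted s : sorted (fun x y => (A x <= A y)%R) (sort_by_val A s).
Proof. rewrite /sort_by_val; apply: sort_sorted; exact: leA_total. Qed.

Lemma sort_val_lt s : uniq s -> sorted ltA (sort_by_val A s).
Proof.
rewrite -(sort_uniq (fun x y => (A x <= A y)%R)) => hu.
move: (sort_val_sorted s) hu; rewrite /sort_by_val.
case: (sort _ s) => [//|x t] /=; exact: path_le_lt.
Qed.

Lemma mem_sort_val s : sort_by_val A s =i s.
Proof. exact: mem_sort. Qed.

Lemma sort_val_head s m : m \in s -> (forall z, z \in s -> (A m <= A z)%R) ->
  exists t, sort_by_val A s = m :: t.
Proof.
move=> ms hm.
have := sort_val_sorted s; have := mem_sort_val s.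
case E: (sort_by_val A s) => [|y t] hmem hs.
  by move: ms; rewrite -hmem.
exists t; congr (_ :: _).
have hy : y \in s by rewrite -hmem inE eqxx.
have hmy : m \in y :: t by rewrite hmem.
apply: leA_anti; last exact: hm.
move: hmy; rewrite inE => /orP [/eqP -> //|hmt].
by have := order_path_min leA_trans hs => /allP /(_ _ hmt).
Qed.

Lemma min_by_val_some s m : m \in s -> (forall z, z \in s -> (A m <= A z)%R) ->
  min_by_val A s = Some m.
Proof. by move=> h1 h2; case: (sort_val_head h1 h2) => t; rewrite /min_by_val => ->. Qed.

Lemma min_by_val_spec s m : min_by_val A s = Some m ->
  m \in s /\ (forall z, z \in s -> (A m <= A z)%R).
Proof.
rewrite /min_by_val.
have := sort_val_sorted s; have := mem_sort_val s.
case E: (sort_by_val A s) => [//|y t] hmem hs /= [<-].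
split; first by rewrite -hmem inE eqxx.
move=> z; rewrite -hmem inE => /orP [/eqP -> //|hz].
by have := order_path_min leA_trans hs => /allP /(_ _ hz).
Qed.

Lemma min_by_val_none s : min_by_val A s = None -> s = [::].
Proof.
rewrite /min_by_val; have := mem_sort_val s.
case: (sort_by_val A s) => [|//] hm _.
by case: s hm => // x s /(_ x); rewrite inE eqxx.
Qed.

Definition is_succ (b : seq T) (u v : T) : bool :=
  [&& u \in b, v \in b, (A u < A v)%R & all (fun z => (A u < A z)%R ==> (A v <= A z)%R) b].

Lemma is_succ_mem b1 b2 u v : b1 =i b2 -> is_succ b1 u v = is_succ b2 u v.
Proof. by move=> e; rewrite /is_succ !e (eq_all_r e). Qed.

Lemma is_succP b u v : reflect
  [/\ u \in b, v \in b, (A u < A v)%R & forall z, z \in b -> (A u < A z)%R -> (A v <= A z)%R]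
  (is_succ b u v).
Proof.
apply: (iffP and4P) => [[h1 h2 h3 /allP h4]|[h1 h2 h3 h4]]; split => //.
  by move=> z /h4 /implyP.
by apply/allP => z /h4 /implyP.
Qed.

Lemma exists_succ b x z : x \in b -> z \in b -> (A x < A z)%R -> exists y, is_succ b x y.
Proof.
move=> xb zb xz.
set s := [seq w <- b | (A x < A w)%R].
case E: (min_by_val A s) => [y|]; last first.
  by move/min_by_val_none: E => /(congr1 (fun l => z \in l)); rewrite mem_filter xz zb.
case/min_by_val_spec: E; rewrite mem_filter => /andP [h1 h2] h3.
exists y; apply/is_succP; split => // w wb xw; apply: h3; by rewrite mem_filter xw wb.
Qed.

Lemma is_succ_cons x s u v : path ltA x s -> u != x -> is_succ (x :: s) u v = is_succ s u v.
Proof.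
move=> hp ux; have hall := order_path_min ltA_trans hp.
apply/is_succP/is_succP => [[h1 h2 h3 h4]|[h1 h2 h3 h4]].
  have us : u \in s by move: h1; rewrite inE (negbTE ux).
  have vs : v \in s.
    move: h2; rewrite inE => /orP [/eqP e|//].
    move/allP: hall => /(_ _ us) /=; rewrite -e => h.
    by move: (lt_trans h h3); rewrite ltxx.
  split => // z zs; apply: h4; by rewrite inE zs orbT.
split => //; try by rewrite inE ?h1 ?h2 orbT.
move=> z; rewrite inE => /orP [/eqP ->|]; last exact: h4.
move/allP: hall => /(_ _ h1) /= h; move=> h'; by move: (lt_trans h h'); rewrite ltxx.
Qed.

Lemma is_succ_head x y s u : path ltA x (y :: s) -> is_succ (x :: y :: s) u y = (u == x).
Proof.
move=> hp; have hall := order_path_min ltA_trans hp.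
apply/is_succP/eqP => [[h1 h2 h3 h4]|->].
  move: h1; rewrite inE => /orP [/eqP //|h1].
  have : (A y <= A u)%R.
    move: h1; rewrite inE => /orP [/eqP -> //|h1].
    by move: hp => /= /andP [_ /(order_path_min ltA_trans) /allP /(_ _ h1) /ltW].
  by rewrite leNgt h3.
split; rewrite ?inE ?eqxx ?orbT //; first by case/andP: hp.
move=> z; rewrite !inE => /orP [/eqP ->|/orP [/eqP -> //|zs]]; first by rewrite ltxx.
move=> _; move: hp => /= /andP [_ /(order_path_min ltA_trans) /allP /(_ _ zs) /ltW //].
Qed.

Lemma mem_zip1 (s t : seq T) a b : (a, b) \in zip s t -> a \in s.
Proof.
elim: s t => [|x s IH] [|y t] //=; rewrite in_cons => /orP [/eqP [-> _]|/IH h].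
  by rewrite inE eqxx.
by rewrite inE h orbT.
Qed.

Lemma succ_uniq b u v1 v2 : is_succ b u v1 -> is_succ b u v2 -> v1 = v2.
Proof.
move=> /is_succP [h1 h2 h3 h4] /is_succP [h1' h2' h3' h4'].
apply: leA_anti; [exact: h4 | exact: h4'].
Qed.

Lemma zip_succ x s u v : path ltA x s -> ((u, v) \in zip (x :: s) s) = is_succ (x :: s) u v.
Proof.
elim: s x => [|y s IH] x hp.
  rewrite /= in_nil; apply/esym/negbTE/is_succP => [[]]; rewrite !inE => /eqP -> /eqP ->.
  by rewrite ltxx.
rewrite /= in_cons.
have hp' : path ltA y s by case/andP: hp.
case: (eqVneq u x) => [->|ux].
  have -> : ((x, v) \in zip (y :: s) s) = false.
    apply/negbTE/negP => /mem_zip1 hz.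
    have := order_path_min ltA_trans hp => /allP /(_ _ hz).
    by rewrite ltxx.
  rewrite orbF xpair_eqE eqxx /=.
  apply/eqP/idP => [->|h]; first by rewrite is_succ_head.
  by apply: succ_uniq h _; rewrite is_succ_head.
by rewrite xpair_eqE (negbTE ux) /= IH // (@is_succ_cons x (y :: s)).
Qed.

Definition stT := ({set T} * (T -> option T))%type.

Lemma foldl_skip (h : stT -> T -> stT) (l : seq T) (st : stT) :
  (forall w, w \in l -> w \in st.1) ->
  foldl (fun (st' : stT) (w : T) => if w \in st'.1 then st' else h st' w) st l = st.
Proof.
elim: l => [//|w l IH] hl /=; rewrite hl ?inE ?eqxx // IH // => z hz.
by apply: hl; rewrite inE hz orbT.
Qed.

Lemma out_nbrsP g x w : (w \in out_nbrs A g x) = g x w.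
Proof. by rewrite /out_nbrs mem_sort_val mem_enum inE. Qed.

Lemma visit_path (g : rel T) x s k (S : {set T}) (par : T -> option T) :
  (forall u v, g u v -> (A u < A v)%R) -> path ltA x s -> path g x s ->
  (forall u w, u \in x :: s -> g u w -> w \in x :: s) -> size s < k ->
  (forall y, y \in x :: s -> y \notin S) ->
  (visit A k g (S, par) x).1 = S :|: [set y in x :: s] /\
  forall y u, ((visit A k g (S, par) x).2 y == Some u) =
     if y \in s then is_succ (x :: s) u y else (par y == Some u).
Proof.
elim: s x k S par => [|y0 s IH] x [//|k] S par hg hlt hpg hcl hk hS; rewrite /=.
  have -> : out_nbrs A g x = [::].
    case E: (out_nbrs A g x) => [//|w l].
    have : w \in out_nbrs A g x by rewrite E inE eqxx.
    rewrite out_nbrsP => gw; have := hcl _ _ (mem_head _ _) gw.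
    rewrite inE => /eqP e; move: (hg _ _ gw); by rewrite e ltxx.
  split => /=; last by [].
  by apply/setP => z; rewrite !inE orbC.
have hall : all (ltA x) (y0 :: s) := order_path_min ltA_trans hlt.
have hnx : forall w, g x w -> w \in y0 :: s.
  move=> w gw; have := hcl _ _ (mem_head _ _) gw; rewrite inE => /orP [/eqP e|//].
  by move: (hg _ _ gw); rewrite e ltxx.
have [rest Eo] : exists rest, out_nbrs A g x = y0 :: rest.
  apply: sort_val_head.
    by rewrite mem_enum inE; case/andP: hpg.
  move=> z; rewrite mem_enum inE => /hnx; rewrite inE => /orP [/eqP -> //|zs].
  move: hlt => /= /andP [_ /(order_path_min ltA_trans) /allP /(_ _ zs) /ltW //].
have hrest : forall w, w \in rest -> w \in y0 :: s.
  by move=> w wr; apply: hnx; rewrite -out_nbrsP Eo inE wr orbT.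
have hy0x : y0 != x by apply/eqP => e; move: hlt; rewrite /= e ltxx.
have hy0S : y0 \notin S by apply: hS; rewrite !inE eqxx orbT.
rewrite /= Eo /= !inE (negbTE hy0x) (negbTE hy0S) /=.
have hlt' : path ltA y0 s by case/andP: hlt.
have hpg' : path g y0 s by case/andP: hpg.
have hxs : x \notin y0 :: s.
  apply/negP => hx; move/allP: hall => /(_ _ hx) /=; by rewrite ltxx.
have hcl' : forall u w, u \in y0 :: s -> g u w -> w \in y0 :: s.
  move=> u w hu guw; have := hcl u w; rewrite inE hu orbT => /(_ isT guw).
  rewrite inE => /orP [/eqP e|//]; move: (hg _ _ guw); rewrite e => h.
  move/allP: hall => /(_ _ hu) /= h'; by move: (lt_trans h h'); rewrite ltxx.
have hS' : forall y, y \in y0 :: s -> y \notin x |: S.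
  move=> y hy; rewrite !inE negb_or.
  have -> : y \notin S by apply: hS; rewrite inE hy orbT.
  rewrite andbT; apply/eqP => e; move: hxs; by rewrite -e hy.
have [IH1 IH2] := IH y0 k (x |: S) (fun z => if z == y0 then Some x else par z) hg hlt' hpg'
  hcl' hk hS'.
rewrite foldl_skip; last first.
  by move=> w /hrest hw; rewrite IH1 inE in_set hw orbT.
split.
  rewrite IH1; apply/setP => z; rewrite !inE.
  by case: (z == x); case: (z == y0); case: (z \in S); case: (z \in s).
move=> y u; rewrite IH2.
have hp0 : path ltA x (y0 :: s) := hlt.
case: (eqVneq y y0) => [->|yy0].
  have hy0s : y0 \notin s.
    apply/negP => hs; move: hlt' => /(order_path_min ltA_trans) /allP /(_ _ hs).
    by rewrite ltxx.
  rewrite (negbTE hy0s) mem_head is_succ_head //.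
  by apply/eqP/eqP => [[->]|->].
rewrite inE (negbTE yy0) /=.
case: ifP => ys //.
case: (eqVneq u x) => [->|ux].
  rewrite {1}/is_succ (negbTE hxs) /=; apply/esym/negP => /is_succP [_ _ _ h].
  have := h y0; rewrite !inE eqxx orbT => /(_ isT (ltac:(by case/andP: hlt))).
  move: hlt' => /(order_path_min ltA_trans) /allP /(_ _ ys) /= h1 h2.
  by move: (lt_le_trans h1 h2); rewrite ltxx.
by rewrite (@is_succ_cons x (y0 :: s)).
Qed.

Definition blocks_ok (bs : seq (T * seq T)) : Prop :=
  [/\ forall rb, rb \in bs -> rb.1 \in rb.2 /\ (forall z, z \in rb.2 -> (A rb.1 <= A z)%R),
      uniq (flatten (map snd bs)) & forall x, x \in flatten (map snd bs)].

Definition samebl (bs : seq (T * seq T)) u v := has (fun rb => (u \in rb.2) && (v \in rb.2)) bs.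
Definition succb (bs : seq (T * seq T)) u v := has (fun rb => is_succ rb.2 u v) bs.

Definition WInv (g : rel T) bs : Prop :=
  [/\ blocks_ok bs, forall u v, g u v -> (A u < A v)%R /\ samebl bs u v
    & forall u v, succb bs u v -> g u v].
Definition Inv (g : rel T) bs : Prop := blocks_ok bs /\ forall u v, g u v = succb bs u v.

Lemma flatten_uniq_same (ss : seq (seq T)) s1 s2 x : uniq (flatten ss) -> s1 \in ss -> s2 \in ss ->
  x \in s1 -> x \in s2 -> s1 = s2.
Proof.
elim: ss => [//|s ss IH] /=; rewrite cat_uniq => /and3P [_ hn hu].
have hx : forall t, t \in ss -> x \in s -> x \in t -> False.
  move=> t ht xs xt; move/negP: hn; apply; apply/hasP; exists x => //.
  by apply/flattenP; exists t.
rewrite !inE => /orP [/eqP ->|h1] /orP [/eqP ->|h2] // x1 x2.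
- by case: (hx _ h2 x1 x2).
- by case: (hx _ h1 x2 x1).
- exact: IH.
Qed.

Lemma blk_closed bs rb u v : blocks_ok bs -> rb \in bs -> u \in rb.2 -> samebl bs u v -> v \in rb.2.
Proof.
case=> _ hu _ hrb hu1 /hasP [rb' hrb' /andP [u' v']].
have -> : rb.2 = rb'.2; last by [].
by apply: (flatten_uniq_same hu (map_f _ hrb) (map_f _ hrb') hu1 u').
Qed.

Lemma blk_closed' bs rb u v : blocks_ok bs -> rb \in bs -> v \in rb.2 -> samebl bs u v -> u \in rb.2.
Proof.
move=> hb hrb hv hs; apply: (blk_closed hb hrb hv).
by case/hasP: hs => rb' h /andP [h1 h2]; apply/hasP; exists rb' => //; rewrite h1 h2.
Qed.

Lemma path_from_succ (e : rel T) x s : path ltA x s -> (forall u v, is_succ (x :: s) u v -> e u v) ->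
  path e x s.
Proof.
elim: s x => [//|y s IH] x hp he /=; apply/andP; split.
  by apply: he; rewrite is_succ_head.
apply: IH; first by case/andP: hp.
move=> u v h; apply: he.
have hu : u \in y :: s by case/is_succP: h.
have ux : u != x.
  apply/eqP => e'; move: hu; rewrite e' => hx.
  by have := order_path_min ltA_trans hp => /allP /(_ _ hx); rewrite ltxx.
by rewrite (@is_succ_cons x (y :: s)).
Qed.

Lemma uniq_size_card (s : seq T) : uniq s -> size s <= #|T|.
Proof. by move=> hu; rewrite -(card_uniqP hu); apply: max_card. Qed.

Lemma dfs_fold (g : rel T) bs bs' (S : {set T}) (par : T -> option T) N :
  #|T| < N -> WInv g bs -> {subset bs' <= bs} -> uniq (flatten (map snd bs')) ->
  (forall y, y \in flatten (map snd bs') -> y \notin S) -> (forall y, y \notin S -> par y = None) ->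
  forall y u,
  ((foldl (fun (st : {set T} * (T -> option T)) r => if r \in st.1 then st else visit A N g st r)
      (S, par) (map fst bs')).2 y == Some u) =
  if y \in flatten (map snd bs') then succb bs' u y else (par y == Some u).
Proof.
move=> hNT hW; case: (hW) => hb hg hsg.
elim: bs' S par => [|[r b] bs' IH] S par hsub hu hS hN y u //=.
have hrb : (r, b) \in bs by apply: hsub; rewrite inE eqxx.
have [hb1 _ _] := hb.
have [rb hmin] := hb1 _ hrb; rewrite /= in rb hmin.
have rS : r \notin S by apply: hS; rewrite /= mem_cat rb.
rewrite (negbTE rS).
move: hu; rewrite /= cat_uniq => /and3P [ub hn hu'].
have [tl Etl] := sort_val_head rb hmin.
have hlt : path ltA r tl by have := sort_val_lt ub; rewrite Etl.
have hmemb : r :: tl =i b by move=> z; rewrite -Etl mem_sort_val.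
have hpg : path g r tl.
  apply: path_from_succ => // u0 v0; rewrite (is_succ_mem _ _ hmemb) => h.
  by apply: hsg; apply/hasP; exists (r, b).
have hcl : forall u0 w, u0 \in r :: tl -> g u0 w -> w \in r :: tl.
  move=> u0 w; rewrite !hmemb => hu0 /hg [_ hs].
  exact: (blk_closed hb hrb hu0 hs).
have hk : size tl < N.
  have hs : size (sort_by_val A b) = size b by rewrite /sort_by_val size_sort.
  by have := uniq_size_card ub; rewrite -hs Etl /= => h; apply: ltn_trans h hNT.
have hdis : forall y0, y0 \in r :: tl -> y0 \notin S.
  by move=> y0; rewrite hmemb => hy; apply: hS; rewrite mem_cat hy.
have hg' : forall u0 v0, g u0 v0 -> (A u0 < A v0)%R by move=> ? ? /hg [].
have [V1 V2] := @visit_path g r tl N S par hg' hlt hpg hcl hk hdis.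
set st1 := visit A N g (S, par) r.
have -> : st1 = (st1.1, st1.2) by case: st1.
have hnb : forall z, z \in flatten (map snd bs') -> z \notin b.
  by move=> z hz; apply/negP => zb; move/negP: hn; apply; apply/hasP; exists z.
rewrite IH //.
- case: ifP => hy.
    rewrite mem_cat hy orbT /=.
    have -> : is_succ b u y = false by apply/negbTE/negP => /is_succP [_ h _ _]; move: (hnb _ hy); rewrite h.
    by [].
  rewrite V2 mem_cat hy orbF.
  have -> : succb bs' u y = false.
    apply/negbTE/negP => /hasP [rb' hrb' /is_succP [_ h _ _]].
    by move/negP: hy; apply; apply/flattenP; exists rb'.2 => //; apply: map_f.
  rewrite orbF -(is_succ_mem _ _ hmemb) -hmemb inE.
  case: ifP => ytl; first by rewrite orbT.
  rewrite orbF; case: (eqVneq y r) => [->|//].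
  rewrite hN //; apply/esym/negbTE/negP => /is_succP [h1 _ h3 _].
  by move: (hmin u); rewrite -hmemb h1 => /(_ isT); rewrite leNgt h3.
- by move=> z hz; apply: hsub; rewrite inE hz orbT.
- move=> z hz; rewrite V1 !inE negb_or hS /=; last by rewrite mem_cat hz orbT.
  by rewrite -in_cons hmemb hnb.
- move=> z; rewrite V1 !inE negb_or -in_cons => /andP [zS ztl].
  have ztl' : z \notin tl by apply: contra ztl => h; rewrite inE h orbT.
  have := V2 z; rewrite (negbTE ztl') (hN _ zS).
  by case: (st1.2 z) => // a /(_ a); rewrite eqxx.
Qed.

Lemma dfs_inv (g : rel T) bs : WInv g bs -> Inv (dfs_forest A g (map fst bs)) bs.
Proof.
move=> hW; case: (hW) => hb _ _; split => // u v.
rewrite /dfs_forest /dfs_parent.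
rewrite (@dfs_fold g bs bs set0 (fun _ => None) #|T|.+1 (ltnSn _) hW) //.
- by case: hb => _ _ ->.
- by case: hb.
- by move=> y _; rewrite in_set0.
Qed.

Lemma seq2_ind (P : seq (T * seq T) -> Prop) :
  P [::] -> (forall x, P [:: x]) -> (forall x y l, P l -> P (x :: y :: l)) -> forall l, P l.
Proof.
move=> h0 h1 h2 l; have [n] := ubnP (size l); elim: n l => [//|n IH] [|x [|y l]] //= hs.
by apply: h2; apply: IH; apply: ltnW.
Qed.

Fixpoint mergepairs (bs : seq (T * seq T)) : seq (T * seq T) :=
  match bs with
  | rb1 :: rb2 :: bs' => ((if (A rb1.1 < A rb2.1)%R then rb1.1 else rb2.1), rb1.2 ++ rb2.2) :: mergepairs bs'
  | _ => bs
  end.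

Lemma mp_roots bs : merge_roots A (map fst bs) = map fst (mergepairs bs).
Proof. by elim/seq2_ind: bs => //= x y l ->. Qed.

Lemma mp_flat bs : flatten (map snd (mergepairs bs)) = flatten (map snd bs).
Proof. by elim/seq2_ind: bs => //= x y l ->; rewrite catA. Qed.

Lemma mp_size bs : size (mergepairs bs) <= maxn 1 (size bs).-1.
Proof.
have : (size (mergepairs bs)).*2 <= (size bs).+1 /\ size (mergepairs bs) <= size bs.
  elim/seq2_ind: bs => //= x y l [h1 h2]; rewrite doubleS; lia.
case=> h1 h2; have := leq_maxl 1 (size bs).-1; have := leq_maxr 1 (size bs).-1.
move: h1 h2; rewrite -muln2; lia.
Qed.

Lemma samebl_mp bs u v : samebl bs u v -> samebl (mergepairs bs) u v.
Proof.
elim/seq2_ind: bs => //= x y l IH; rewrite /samebl /= -!/(samebl _ _ _).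
rewrite !mem_cat => /orP [/andP [h1 h2]|/orP [/andP [h1 h2]|/IH ->]]; last by rewrite orbT.
  by rewrite h1 h2.
by rewrite h1 h2 !orbT.
Qed.

Lemma blocks_mp bs : blocks_ok bs -> blocks_ok (mergepairs bs).
Proof.
case=> h1 h2 h3; split; rewrite ?mp_flat //.
elim/seq2_ind: bs h1 {h2 h3} => //= x y l IH h rb; rewrite inE => /orP [/eqP ->|hrb]; last first.
  by apply: IH => // rb' hrb'; apply: h; rewrite !inE hrb' !orbT.
have [hx1 hx2] := h x (mem_head _ _).
have [hy1 hy2] := h y (ltac:(by rewrite !inE eqxx orbT)).
rewrite /=; case: ifP => hxy; split; rewrite ?mem_cat ?hx1 ?hy1 ?orbT // => z;
  rewrite mem_cat => /orP [/hx2|/hy2] // h'.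
- by apply: le_trans h'; apply: ltW.
- by apply: le_trans h'; rewrite leNgt hxy.
Qed.

Lemma comp_min_root g bs rb : WInv g bs -> rb \in bs -> comp_min A g rb.1 = rb.1.
Proof.
case=> hb hg _ hrb; rewrite /comp_min.
have [hb1 _ _] := hb; have [r1 hmin] := hb1 _ hrb.
rewrite (@min_by_val_some _ rb.1) //.
  by rewrite mem_enum inE connect0.
move=> z; rewrite mem_enum inE => hz; apply: hmin.
have hcl : closed (ugraph g) rb.2.
  move=> x y /orP [/hg [_ hs]|/hg [_ hs]]; apply/idP/idP => h.
  - exact: (blk_closed hb hrb h hs).
  - exact: (blk_closed' hb hrb h hs).
  - exact: (blk_closed' hb hrb h hs).
  - exact: (blk_closed hb hrb h hs).
by rewrite -(closed_connect hcl hz).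
Qed.

Definition upf p (b : seq T) := [seq z <- b | (A p <= A z)%R].

Lemma mem_upf p b z : (z \in upf p b) = (z \in b) && (A p <= A z)%R.
Proof. by rewrite mem_filter andbC. Qed.

Lemma count_lt (a1 a2 : pred T) s z : (forall w, a1 w -> a2 w) -> z \in s -> a2 z -> ~~ a1 z ->
  count a1 s < count a2 s.
Proof.
move=> hs; elim: s => [//|w s IH] /=; rewrite inE => /orP [/eqP ->|zs] h2 h1.
  rewrite h2 (negbTE h1) add0n add1n ltnS; exact: sub_count.
have := IH zs h2 h1; have := hs w; case: (a1 w); case: (a2 w) => /= hh; try (by have := hh isT); lia.
Qed.

Lemma mc_arcs (g : rel T) b1 b2 :
  (forall x w, x \in b1 -> g x w -> w \in b1) -> (forall x w, x \in b2 -> g x w -> w \in b2) ->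
  (forall z, z \in b1 -> z \notin b2) ->
  forall k p q, p \in b1 -> q \in b2 -> forall x y, (x, y) \in merge_chain A k g p q ->
  (A x < A y)%R /\ x \in b1 ++ b2 /\ y \in b1 ++ b2.
Proof.
move=> hc1 hc2 hd; elim=> [//|k IH] p q hp hq x y /=.
have pq : p != q by apply/eqP => e; move: (hd _ hp); rewrite e hq.
case: ifP => hpq; rewrite inE => /orP [/eqP [-> ->]|].
- by rewrite !mem_cat hp hq orbT.
- case E: (min_by_val _ _) => [p'|//]; apply: IH => //.
  by have [] := min_by_val_spec E; rewrite mem_enum inE => /(hc1 _ _ hp).
- by rewrite !mem_cat hp hq orbT; split => //; apply: not_ltA => //; rewrite hpq.
- case E: (min_by_val _ _) => [q'|//]; apply: IH => //.
  by have [] := min_by_val_spec E; rewrite mem_enum inE => /(hc2 _ _ hq).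
Qed.

Lemma mc_step (g : rel T) b1 b2 p q x y :
  (forall x w, x \in b1 -> g x w -> w \in b1 /\ (A x < A w)%R) ->
  (forall x y, is_succ b1 x y -> g x y) -> (forall x y, is_succ b2 x y -> g x y) ->
  p \in b1 -> q \in b2 -> (A p < A q)%R -> is_succ (upf p b1 ++ upf q b2) x y ->
  [\/ x = p /\ y = q, g x y |
   exists p', [/\ min_by_val A (enum [pred w | g p w]) = Some p', p' \in b1,
                is_succ (upf p' b1 ++ upf q b2) x y &
                size (upf p' b1 ++ upf q b2) < size (upf p b1 ++ upf q b2)]].
Proof.
move=> hc1 hs1 hs2 hp hq hpq /is_succP [hx hy hxy hmin].
have hqU : q \in upf p b1 ++ upf q b2 by rewrite mem_cat !mem_upf hq lexx orbT.
case: (eqVneq x p) => [xp|xp].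
  subst x; move: hy; rewrite mem_cat !mem_upf => /orP [/andP [yb1 _]|/andP [yb2 hqy]].
    apply: Or32; apply: hs1; apply/is_succP; split => // z zb1 hz.
    by apply: hmin => //; rewrite mem_cat mem_upf zb1 ltW.
  apply: Or31; split => //; apply: leA_anti => //; exact: hmin.
have hpx : (A p < A x)%R.
  move: hx; rewrite mem_cat !mem_upf => /orP [/andP [_ h]|/andP [_ h]].
    by rewrite lt_neqAle h andbT; apply/eqP => e; move: xp; rewrite (Ainj e) eqxx.
  exact: lt_le_trans hpq h.
have hpy : (A p < A y)%R := lt_trans hpx hxy.
case E: (min_by_val A (enum [pred w | g p w])) => [p'|].
  have [] := min_by_val_spec E; rewrite mem_enum inE => gpp' hm.
  have [hp' hpp'] := hc1 _ _ hp gpp'.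
  have key : forall z, z \in b1 -> (A p' <= A z)%R = (A p < A z)%R.
    move=> z zb1; apply/idP/idP => h; first exact: lt_le_trans hpp' h.
    have [y' hy'] := exists_succ hp zb1 h.
    have := hm y'; rewrite mem_enum inE => /(_ (hs1 _ _ hy')) h1.
    by apply: le_trans h1 _; case/is_succP: hy' => _ _ _; apply.
  have hU' : forall z, (A p < A z)%R -> (z \in upf p' b1 ++ upf q b2) = (z \in upf p b1 ++ upf q b2).
    move=> z hz; rewrite !mem_cat !mem_upf.
    case: (boolP (z \in b1)) => zb1 /=; last by [].
    by rewrite key // hz (ltW hz).
  apply: Or33; exists p'; split => //.
    apply/is_succP; split; rewrite ?hU' //.
    move=> z; rewrite mem_cat mem_upf => /orP [/andP [zb1 hz]|hz2] hxz; apply: hmin => //.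
      by rewrite mem_cat mem_upf zb1 (ltW (lt_le_trans hpp' hz)).
    by rewrite mem_cat hz2 orbT.
  rewrite !size_cat ltn_add2r !size_filter.
  apply: (@count_lt _ _ _ p) => //.
    by move=> w /= h; apply: le_trans h; apply: ltW.
  by rewrite /= -ltNge.
have none := min_by_val_none E.
have nob1 : forall z, z \in b1 -> (A p < A z)%R -> False.
  move=> z zb1 hz; have [y' hy'] := exists_succ hp zb1 hz.
  have : y' \in enum [pred w | g p w] by rewrite mem_enum inE; apply: hs1.
  by rewrite none.
have inb2 : forall z, z \in upf p b1 ++ upf q b2 -> (A p < A z)%R -> z \in upf q b2.
  move=> z; rewrite mem_cat => /orP [|//]; rewrite mem_upf => /andP [zb1 _] hz.
  by case: (nob1 _ zb1 hz).
have hx2 := inb2 _ hx hpx; have hy2 := inb2 _ hy hpy.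
apply: Or32; apply: hs2; move: hx2 hy2; rewrite !mem_upf => /andP [xb2 hqx] /andP [yb2 _].
apply/is_succP; split => // z zb2 hz; apply: hmin => //.
by rewrite mem_cat !mem_upf zb2 (le_trans hqx (ltW hz)) orbT.
Qed.

Lemma mc_ok (g : rel T) b1 b2 :
  (forall x w, x \in b1 -> g x w -> w \in b1 /\ (A x < A w)%R) ->
  (forall x w, x \in b2 -> g x w -> w \in b2 /\ (A x < A w)%R) ->
  (forall x y, is_succ b1 x y -> g x y) -> (forall x y, is_succ b2 x y -> g x y) ->
  (forall z, z \in b1 -> z \notin b2) ->
  forall k p q, p \in b1 -> q \in b2 -> size (upf p b1 ++ upf q b2) <= k ->
  forall x y, is_succ (upf p b1 ++ upf q b2) x y -> g x y || ((x, y) \in merge_chain A k g p q).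
Proof.
move=> hc1 hc2 hs1 hs2 hd; elim=> [|k IH] p q hp hq hk x y hxy.
  have : p \in upf p b1 ++ upf q b2 by rewrite mem_cat mem_upf hp lexx.
  by move: hk; rewrite leqn0 => /nilP ->.
have pq : p != q by apply/eqP => e; move: (hd _ hp); rewrite e hq.
rewrite /=; case: ifP => hpq.
  case: (mc_step hc1 hs1 hs2 hp hq hpq hxy) => [[-> ->]|->|[p' [E hp' hs hsz]]].
  - by rewrite inE eqxx orbT.
  - by [].
  rewrite E inE; have := IH p' q hp' hq (ltac:(by rewrite -ltnS; apply: leq_trans hsz hk)) x y hs.
  by case/orP => ->; rewrite ?orbT.
have hqp := not_ltA pq (negbT hpq).
have hperm : forall a b, upf a b1 ++ upf b b2 =i upf b b2 ++ upf a b1.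
  by move=> a b z; rewrite !mem_cat orbC.
have hsz : forall a b, size (upf a b1 ++ upf b b2) = size (upf b b2 ++ upf a b1).
  by move=> a b; rewrite !size_cat addnC.
move: hxy; rewrite (is_succ_mem _ _ (hperm p q)) => hxy.
case: (mc_step hc2 hs2 hs1 hq hp hqp hxy) => [[-> ->]|->|[q' [E hq' hs hsz']]].
- by rewrite inE eqxx orbT.
- by [].
rewrite E inE; move: hs; rewrite -(is_succ_mem _ _ (hperm p q')) => hs.
have := IH p q' hp hq' (ltac:(by rewrite -ltnS hsz; apply: leq_trans hsz' _; rewrite -hsz)) x y hs.
by case/orP => ->; rewrite ?orbT.
Qed.

Lemma merge_arcs_ok (g : rel T) bs : WInv g bs -> forall bs', {subset bs' <= bs} ->
  uniq (flatten (map snd bs')) ->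
  (forall x y, (x, y) \in merge_arcs A g (map fst bs') -> (A x < A y)%R /\ samebl (mergepairs bs') x y) /\
  (forall x y, succb (mergepairs bs') x y -> g x y || ((x, y) \in merge_arcs A g (map fst bs'))).
Proof.
move=> hW; case: (hW) => hb hg hsg; have [hb1 _ _] := hb.
have hsb : forall l, {subset l <= bs} -> forall x y, succb l x y -> g x y.
  move=> l hl x y /hasP [rb hrb h]; apply: hsg; apply/hasP; exists rb => //; exact: hl.
have hcl : forall rb, rb \in bs -> forall x w, x \in rb.2 -> g x w -> w \in rb.2 /\ (A x < A w)%R.
  move=> rb hrb x w hx /hg [h1 h2]; split => //; exact: (blk_closed hb hrb hx h2).
have hsi : forall rb, rb \in bs -> forall x y, is_succ rb.2 x y -> g x y.
  by move=> rb hrb x y h; apply: hsg; apply/hasP; exists rb.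
elim/seq2_ind => [|rb|rb1 rb2 l IH] hsub hu.
- by split.
- split => // x y h; rewrite (hsb [:: rb]) //.
have hrb1 : rb1 \in bs by apply: hsub; rewrite inE eqxx.
have hrb2 : rb2 \in bs by apply: hsub; rewrite !inE eqxx orbT.
have hsub' : {subset l <= bs} by move=> z hz; apply: hsub; rewrite !inE hz !orbT.
have hu' : uniq ((rb1.2 ++ rb2.2) ++ flatten (map snd l)) by rewrite -catA.
move: hu'; rewrite cat_uniq => /and3P [hu12 _ hul].
have -> : merge_arcs A g (map fst [:: rb1, rb2 & l]) = merge_chain A #|T|.+1 g (comp_min A g rb1.1)
   (comp_min A g rb2.1) ++ merge_arcs A g (map fst l) by [].
rewrite [mergepairs _]/=.
have [IH1 IH2] := IH hsub' hul.
have hd : forall z, z \in rb1.2 -> z \notin rb2.2.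
  move: hu12; rewrite cat_uniq => /and3P [_ hn _] z z1; apply/negP => z2.
  by move/negP: hn; apply; apply/hasP; exists z.
have [r1 hmin1] := hb1 _ hrb1; have [r2 hmin2] := hb1 _ hrb2.
rewrite (comp_min_root hW hrb1) (comp_min_root hW hrb2).
split.
  move=> x y; rewrite mem_cat => /orP [h|/IH1 [h1 h2]].
    have [h1 [h2 h3]] := mc_arcs (fun x w hx hg => (hcl _ hrb1 x w hx hg).1)
                                 (fun x w hx hg => (hcl _ hrb2 x w hx hg).1) hd r1 r2 h.
    by split => //; rewrite /samebl /= -/(samebl _ _ _) h2 h3.
  by split => //; rewrite /samebl /= -/(samebl _ _ _) h2 orbT.
move=> x y /orP [h|/IH2]; last first.
  by case/orP => [->|h]; rewrite ?mem_cat ?h ?orbT.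
have hsz : size (upf rb1.1 rb1.2 ++ upf rb2.1 rb2.2) <= #|T|.+1.
  apply: leq_trans (leqnSn _); apply: leq_trans (uniq_size_card hu12).
  by rewrite !size_cat !size_filter leq_add ?count_size.
have hmem : upf rb1.1 rb1.2 ++ upf rb2.1 rb2.2 =i rb1.2 ++ rb2.2.
  move=> z; rewrite !mem_cat !mem_upf.
  by case: (boolP (z \in rb1.2)) => [/hmin1 ->|_] //=; case: (boolP (z \in rb2.2)) => [/hmin2 ->|_].
move: h; rewrite -(is_succ_mem _ _ hmem) => h.
have := mc_ok (hcl _ hrb1) (hcl _ hrb2) (hsi _ hrb1) (hsi _ hrb2) hd r1 r2 hsz h.
by case/orP => [->|h0]; rewrite ?mem_cat ?h0 ?orbT.
Qed.

Lemma merge_winv (g : rel T) bs : WInv g bs ->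
  WInv (add_arcs g (merge_arcs A g (map fst bs))) (mergepairs bs).
Proof.
move=> hW; case: (hW) => hb hg hsg.
have [M1 M2] := merge_arcs_ok hW (fun x h => h) (ltac:(by case: hb)).
split; first exact: blocks_mp.
  move=> u v; rewrite /add_arcs => /orP [/hg [h1 h2]|/M1 //].
  by split => //; apply: samebl_mp.
by move=> u v /M2.
Qed.

Lemma Inv_WInv g bs : Inv g bs -> WInv g bs.
Proof.
case=> hb hg; split => // [u v|u v]; rewrite hg //.
case/hasP => rb hrb /is_succP [h1 h2 h3 _]; split => //.
by apply/hasP; exists rb => //; rewrite h1 h2.
Qed.

Lemma step_ok g bs : WInv g bs ->
  let ms := merge_step A g (map fst bs) in
  Inv (dfs_forest A ms.1 ms.2) (mergepairs bs) /\ ms.2 = map fst (mergepairs bs).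
Proof.
move=> hW /=; rewrite mp_roots; split => //; apply: dfs_inv; exact: merge_winv.
Qed.

Lemma iter_ok X0 bs0 : WInv X0 bs0 -> forall i, exists bs,
  [/\ Inv (iter_state A X0 (map fst bs0) i.+1).1 bs,
      (iter_state A X0 (map fst bs0) i.+1).2 = map fst bs &
      size bs <= maxn 1 (size bs0 - i.+1)].
Proof.
move=> hW; elim=> [|i [bs [h1 h2 h3]]].
  have [S1 S2] := step_ok hW; exists (mergepairs bs0); split => //.
  by have := mp_size bs0; rewrite subn1.
have hW' := Inv_WInv h1.
have [S1 S2] := step_ok hW'.
exists (mergepairs bs).
have -> : iter_state A X0 (map fst bs0) i.+2 =
   (let ms := merge_step A (iter_state A X0 (map fst bs0) i.+1).1
                (iter_state A X0 (map fst bs0) i.+1).2 in (dfs_forest A ms.1 ms.2, ms.2)) by [].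
rewrite h2; split => //.
have := mp_size bs; move: h3; rewrite -!subn1; lia.
Qed.

Lemma idx_lt (s : seq T) u v : sorted ltA s -> u \in s -> v \in s -> (A u < A v)%R ->
  index u s < index v s.
Proof.
move=> hs hu hv huv; rewrite ltnNge; apply/negP; rewrite leq_eqVlt => /orP [/eqP e|h].
  have : nth u s (index u s) = nth u s (index v s) by rewrite e.
  rewrite !nth_index // => e'; by rewrite e' ltxx in huv.
have := sorted_ltn_nth ltA_trans u hs; rewrite -!index_mem in hu hv.
move=> /(_ _ _ hv hu h); rewrite !nth_index -?index_mem // => h'.
by move: (lt_trans h' huv); rewrite ltxx.
Qed.

Lemma path_zip (e : rel T) x s : (forall u v, (u, v) \in zip (x :: s) s -> e u v) -> path e x s.
Proof.
elim: s x => [//|y s IH] x h /=; rewrite h ?inE ?eqxx //=.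
by apply: IH => u v hz; apply: h; rewrite /= inE hz orbT.
Qed.

Lemma sorted_index (t : seq T) : uniq t -> sorted (fun x y => index x t < index y t) t.
Proof.
case: t => [//|y t'] hu; apply/(pathP y) => i hi.
rewrite -[nth y t' i]/(nth y (y :: t') i.+1) !index_uniq //=; exact: ltnW.
Qed.

Lemma final_ok g bs : Inv g bs -> size bs <= 1 ->
  is_ham_path_graph g (sort_by_val A (enum T)) /\
  (forall t, is_topsort g t <-> t = sort_by_val A (enum T)).
Proof.
case=> hb hg hsz; have [_ _ hcov] := hb.
set s := sort_by_val A (enum T).
have us : uniq s by rewrite /s /sort_by_val sort_uniq enum_uniq.
have cs : forall x, x \in s by move=> x; rewrite mem_sort_val mem_enum.
have sl : sorted ltA s by apply: sort_val_lt; apply: enum_uniq.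
have hz : forall u v, g u v = ((u, v) \in zip s (behead s)).
  move=> u v; rewrite hg.
  move: hsz hcov; case: bs {hb hg} => [|[r b] [|//]] _ hcov; first by have := hcov u.
  have hbs : b =i s by move=> z; rewrite cs; have := hcov z; rewrite /= cats0.
  rewrite /succb /= orbF (is_succ_mem _ _ hbs).
  have [x [s' Es]] : exists x s', s = x :: s'.
    by move: (cs u); case: (s) => [//|x s'] _; exists x, s'.
  by move: sl; rewrite Es /= => hp; rewrite zip_succ.
split; first by split.
move=> t; split => [/andP [hp /forallP ht]|->].
  have ut : uniq t by rewrite (perm_uniq hp) enum_uniq.
  apply: (@irr_sorted_eq _ (fun x y => index x t < index y t)).
  - by move=> ? ? ?; apply: ltn_trans.
  - by move=> x; rewrite ltnn.
  - exact: sorted_index.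
  - case Es: s hz => [//|x s'] hz /=; apply: path_zip => u v huv.
    by have := ht u => /forallP /(_ v) /implyP; apply; rewrite hz.
  - by move=> z; rewrite cs (perm_mem hp) mem_enum.
apply/andP; split; first by rewrite /s /sort_by_val perm_sort perm_refl.
apply/forallP => u; apply/forallP => v; apply/implyP; rewrite hz => h.
have : is_succ s u v.
  case Es: s h sl => [//|x s'] /= h hp; by rewrite -zip_succ.
by case/is_succP => h1 h2 h3 _; apply: idx_lt.
Qed.

Definition parok (g : rel T) (st : {set T} * (T -> option T)) :=
  forall y w, st.2 y = Some w -> g w y.

Lemma visit_inv (g : rel T) k st u : parok g st -> parok g (visit A k g st u).
Proof.
elim: k st u => [//|k IH] st u hst /=.
set o := out_nbrs A g u.
have : {subset o <= out_nbrs A g u} by [].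
have : parok g (u |: st.1, st.2) by [].
clearbody o; elim: o (u |: st.1, st.2) => [//|w l IHl] st' hst' hsub /=.
apply: IHl; last by move=> z hz; apply: hsub; rewrite inE hz orbT.
case: ifP => // _; apply: IH => y w' /=; case: ifP => [/eqP -> [<-]|_ /hst' //].
by rewrite -out_nbrsP; apply: hsub; rewrite inE eqxx.
Qed.

Lemma dfs_fold_inv (g : rel T) N L st : parok g st ->
  parok g (foldl (fun (st : {set T} * (T -> option T)) r => if r \in st.1 then st else visit A N g st r) st L).
Proof.
elim: L st => [//|r L IH] st hst /=; apply: IH; case: ifP => // _; exact: visit_inv.
Qed.

Lemma dfs_par_arc (g : rel T) L v u : dfs_parent A g L v = Some u -> g u v.
Proof.
by move=> h; apply: (@dfs_fold_inv g #|T|.+1 L (set0, fun _ => None)) h.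
Qed.

Section Forest.
Variable par : T -> option T.
Hypothesis Hpar : forall v u, par v = Some u -> (A u < A v)%R.
Hypothesis Hdeg1 : forall u c1 c2, par c1 = Some u -> par c2 = Some u -> par u != None -> c1 = c2.
Hypothesis Hdeg2 : forall u c1 c2 c3, par c1 = Some u -> par c2 = Some u -> par c3 = Some u ->
  [|| c1 == c2, c1 == c3 | c2 == c3].

Definition F : rel T := fun u w => par w == Some u.

Definition rank v := #|[pred y | (A y < A v)%R]|.

Lemma rank_lt u v : (A u < A v)%R -> rank u < rank v.
Proof.
move=> huv; apply: proper_card; apply/properP; split.
  by apply/subsetP => y; rewrite !inE => h; apply: lt_trans h huv.
by exists u; rewrite !inE ?huv ?ltxx.
Qed.

Lemma rank_max v : rank v < #|T|.
Proof.
rewrite /rank -(cardC [pred y | (A y < A v)%R]) -[X in X < _]addn0 ltn_add2l.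
by apply/card_gt0P; exists v; rewrite !inE ltxx.
Qed.

Definition fpar x := odflt x (par x).
Definition rt v := iter #|T| fpar v.

Lemma iter_root k r : par r = None -> iter k fpar r = r.
Proof. by move=> h; elim: k => //= k ->; rewrite /fpar h. Qed.

Lemma rt_root v : par (rt v) = None.
Proof.
have key : forall k, par (iter k fpar v) != None -> rank (iter k fpar v) + k <= rank v.
  elim=> [|k IH]; first by rewrite addn0.
  rewrite iterS; case E: (par (iter k fpar v)) => [u|]; last by rewrite /fpar E E.
  rewrite /fpar E /= => hu; have := rank_lt (Hpar E); have := IH (ltac:(by rewrite E)); lia.
case E: (par (rt v)) => [u|] //; have := key #|T|; rewrite -/(rt v) E => /(_ isT).
by have := rank_max v; lia.
Qed.

Lemma rt_le v : (A (rt v) <= A v)%R.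
Proof.
rewrite /rt; elim: #|T| => [//|k IH]; rewrite iterS /fpar.
case E: (par _) => [u|] //=; apply: le_trans IH; exact: ltW (Hpar E).
Qed.

Lemma rt_par v u : par v = Some u -> rt v = rt u.
Proof.
move=> h; rewrite /rt -[in RHS](_ : fpar v = u); last by rewrite /fpar h.
by rewrite -iterSr iterS -/(rt v) /fpar rt_root.
Qed.

Lemma rt_of_root r : par r = None -> rt r = r.
Proof. exact: iter_root. Qed.

Lemma FP u w : F u w = (par w == Some u).
Proof. by []. Qed.

Lemma conn_rt v : connect F (rt v) v.
Proof.
rewrite /rt; elim: #|T| => [|k IH]; first exact: connect0.
rewrite iterS /fpar; case E: (par _) => [u|] //=.
by apply: connect_trans IH; apply: connect1; rewrite FP E.
Qed.

Lemma conn_le x y : connect F x y -> (A x <= A y)%R.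
Proof.
case/connectP => p; elim: p x => [|z p IH] x /=; first by move=> _ ->.
by case/andP => /eqP h hp hy; apply: le_trans (IH _ hp hy); apply: ltW; apply: Hpar h.
Qed.

Lemma conn_rt_eq x y : connect F x y -> rt y = rt x.
Proof.
case/connectP => p; elim: p x => [|z p IH] x /=; first by move=> _ ->.
by case/andP => /eqP h hp hy; rewrite (IH _ hp hy); apply: rt_par.
Qed.

Lemma conn_fwd x y : connect F x y -> x = y \/ exists2 c, F x c & connect F c y.
Proof.
case/connectP => [[|c p]] /=; first by move=> _ ->; left.
by case/andP => hc hp hy; right; exists c => //; apply/connectP; exists p.
Qed.

Lemma conn_bwd x y : connect F x y -> x = y \/ exists2 u, par y = Some u & connect F x u.
Proof.
case/connectP => p; case/lastP: p => [|p z] /=; first by move=> _ ->; left.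
rewrite rcons_path last_rcons => /andP [hp /eqP hz] ->; right.
by exists (last x p) => //; apply/connectP; exists p.
Qed.

Lemma conn_chain a x y : par a != None -> connect F a x -> connect F a y ->
  connect F x y \/ connect F y x.
Proof.
move=> ha /connectP [p hp ->] {x}; elim: p a ha hp y => [|c p IH] a ha /= hp y hy.
  by left.
case/andP: hp => hac hp.
case: (conn_fwd hy) => [<-|[c' hac' hc'y]].
  by right; apply/connectP; exists (c :: p) => //=; rewrite hac.
have ec : c' = c by move: (hac') (hac); rewrite !FP => /eqP h1 /eqP h2; exact: Hdeg1 h1 h2 ha.
subst c'; apply: (IH c) => //; by move: hac; rewrite FP => /eqP ->.
Qed.

Lemma conn_disj r a b v : par a = Some r -> par b = Some r -> a != b ->
  connect F a v -> connect F b v -> False.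
Proof.
move=> ha hb ab; have [m] := ubnP (rank v); elim: m v => [//|m IH] v hm hav hbv.
case: (conn_bwd hav) => [ea|[u1 hu1 hau1]].
  subst v; case: (conn_bwd hbv) => [eb|[u2 hu2 hbu2]]; first by move: ab; rewrite eb eqxx.
  move: hu2; rewrite ha => -[e2]; subst u2.
  by have := conn_le hbu2; rewrite leNgt (Hpar hb).
case: (conn_bwd hbv) => [eb|[u2 hu2 hbu2]].
  subst v; case: (conn_bwd hav) => [ea|[u3 hu3 hau3]]; first by move: ab; rewrite ea eqxx.
  move: hu3; rewrite hb => -[e3]; subst u3.
  by have := conn_le hau3; rewrite leNgt (Hpar ha).
move: hu2; rewrite hu1 => -[e]; subst u2.
apply: (IH u1) => //; have := rank_lt (Hpar hu1); lia.
Qed.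

Definition Dsc a := [seq v <- enum T | connect F a v].

Lemma mem_Dsc a v : (v \in Dsc a) = connect F a v.
Proof. by rewrite mem_filter mem_enum andbT. Qed.

Lemma Dsc_succ a x y : par a != None -> is_succ (Dsc a) x y -> F x y.
Proof.
move=> ha /is_succP [hx hy hxy hmin]; move: hx hy; rewrite !mem_Dsc => hx hy.
case: (conn_chain ha hx hy) => hc; last by have := conn_le hc; rewrite leNgt hxy.
case: (conn_fwd hc) => [e|[c hxc hcy]]; first by move: hxy; rewrite e ltxx.
have hac : connect F a c by apply: connect_trans hx (connect1 hxc).
have := hmin c; rewrite mem_Dsc hac => /(_ isT (Hpar (eqP hxc))) h.
by rewrite (leA_anti (conn_le hcy) h) in hxc.
Qed.

Lemma Dsc_closed a x w : x \in Dsc a -> F x w -> w \in Dsc a /\ (A x < A w)%R.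
Proof.
rewrite !mem_Dsc => hx hxw; split; last exact: Hpar (eqP hxw).
by apply: connect_trans hx (connect1 hxw).
Qed.

Lemma is_rootP r : is_root F r = (par r == None).
Proof.
apply/forallP/eqP => [h|h u]; last by rewrite FP h.
by case E: (par r) => [u|] //; have := h u; rewrite FP E eqxx.
Qed.

Definition tree r := [seq v <- enum T | rt v == r].

Lemma mem_tree r v : (v \in tree r) = (rt v == r).
Proof. by rewrite mem_filter mem_enum andbT. Qed.

Lemma mem_children r w : (w \in children A F r) = F r w.
Proof. by rewrite /children mem_sort_val mem_enum inE. Qed.

Lemma uniq_children r : uniq (children A F r).
Proof. by rewrite /children /sort_by_val sort_uniq enum_uniq. Qed.

Lemma uniq_trees (rs : seq T) : uniq rs -> uniq (flatten [seq tree r | r <- rs]).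
Proof.
elim: rs => [//|r rs IH] /= /andP [hr hu]; rewrite cat_uniq IH // andbT.
rewrite filter_uniq ?enum_uniq //=; apply/hasP => -[x /flatten_mapP [r' hr' hx] hx'].
move: hx hx'; rewrite !mem_tree => /eqP e1 /eqP e2; by move: hr; rewrite -e2 e1 hr'.
Qed.

Lemma Dsc_min a z : z \in Dsc a -> (A a <= A z)%R.
Proof. by rewrite mem_Dsc; apply: conn_le. Qed.

Lemma Dsc_tree r a z : F r a -> z \in Dsc a -> rt z = rt r.
Proof. by move=> hra; rewrite mem_Dsc => h; apply: conn_rt_eq; apply: connect_trans (connect1 hra) h. Qed.

Lemma Dsc_uniq a b r : par a = Some r -> par b = Some r -> a != b -> uniq (Dsc a ++ Dsc b).
Proof.
have hD : forall c, uniq (Dsc c) by move=> c; apply: filter_uniq; apply: enum_uniq.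
move=> ha hb ab; rewrite cat_uniq !hD andbT /=.
apply/hasP => -[z]; rewrite !mem_Dsc => h1 h2; exact: conn_disj ha hb ab h2 h1.
Qed.

Definition mcarcs := flatten [seq (match children A F r with
                            | [:: a; b] => merge_chain A #|T|.+1 F a b
                            | _ => [::] end) | r <- enum T & is_root F r].

Lemma X0E : merge_subtrees A F = add_arcs F mcarcs.
Proof. by []. Qed.

Lemma mcarcs_ok u v : (u, v) \in mcarcs -> (A u < A v)%R /\ rt u = rt v.
Proof.
case/flatten_mapP => r; rewrite mem_filter => /andP [hr _].
case E: (children A F r) => [|a [|b [|c l]]] // h.
have hra : F r a by rewrite -mem_children E inE eqxx.
have hrb : F r b by rewrite -mem_children E !inE eqxx orbT.
have ab : a != b by have := uniq_children r; rewrite E /= inE andbT.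
move: (hra) (hrb); rewrite !FP => /eqP ha /eqP hb.
have hd : forall z, z \in Dsc a -> z \notin Dsc b.
  move=> z; rewrite !mem_Dsc => h1; apply/negP => h2; exact: conn_disj ha hb ab h1 h2.
have pa : a \in Dsc a by rewrite mem_Dsc connect0.
have pb : b \in Dsc b by rewrite mem_Dsc connect0.
have [h1 [h2 h3]] := mc_arcs (fun x w hx hg => (Dsc_closed hx hg).1) (fun x w hx hg => (Dsc_closed hx hg).1)
   hd pa pb h.
split => //; move: h2 h3; rewrite !mem_cat.
by case/orP => [/(Dsc_tree hra)|/(Dsc_tree hrb)] ->; case/orP => [/(Dsc_tree hra)|/(Dsc_tree hrb)] ->.
Qed.

Lemma succ_tree r u v : par r = None -> is_succ (tree r) u v -> merge_subtrees A F u v.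
Proof.
move=> hr /is_succP [hu hv huv hmin]; rewrite X0E /add_arcs.
move: hu hv; rewrite !mem_tree => /eqP hu /eqP hv.
have cu : connect F r u by rewrite -hu; apply: conn_rt.
have cv : connect F r v by rewrite -hv; apply: conn_rt.
have htr : forall c z, F r c -> z \in Dsc c -> z \in tree r.
  by move=> c z hc hz; rewrite mem_tree (Dsc_tree hc hz) rt_of_root.
case: (eqVneq u r) => [eur|ur].
  subst u; case: (conn_fwd cv) => [e|[c hrc hcv]]; first by move: huv; rewrite e ltxx.
  have hcr : c \in tree r by apply: (htr c c hrc); rewrite mem_Dsc connect0.
  have := hmin c hcr (Hpar (eqP hrc)) => h.
  by rewrite (leA_anti (conn_le hcv) h) in hrc; rewrite hrc.
case: (conn_fwd cu) => [e|[a hra hau]]; first by move: ur; rewrite e eqxx.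
have vr : v != r.
  by apply/eqP => e; move: (le_lt_trans (conn_le cu) huv); rewrite e ltxx.
case: (conn_fwd cv) => [e|[b hrb hbv]]; first by move: vr; rewrite e eqxx.
move: (hra) (hrb); rewrite !FP => /eqP ha /eqP hb.
case: (eqVneq a b) => [eab|ab].
  subst b; apply/orP; left; apply: (@Dsc_succ a); first by rewrite ha.
  apply/is_succP; split; rewrite ?mem_Dsc // => z hz; apply: hmin; exact: htr hra hz.
have [c1 [c2 [E hab]]] : exists c1 c2, children A F r = [:: c1; c2] /\
    (forall z, (z == a) || (z == b) -> (z == c1) || (z == c2)).
  have hua := uniq_children r.
  have ia : a \in children A F r by rewrite mem_children.
  have ib : b \in children A F r by rewrite mem_children.
  have hch : forall w, w \in children A F r -> par w = Some r.
    by move=> w; rewrite mem_children FP => /eqP.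
  move: hua ia ib hch; case: (children A F r) => [|x [|y [|z l]]] //.
  - move=> _; rewrite !inE => /eqP ea /eqP eb; by move: ab; rewrite ea eb eqxx.
  - move=> _ ia ib _; exists x, y; split => // z /orP [/eqP ->|/eqP ->]; by [move: ia; rewrite !inE | move: ib; rewrite !inE].
  move=> hu' _ _ hch'.
  have := Hdeg2 (hch' x (ltac:(by rewrite !inE eqxx))) (hch' y (ltac:(by rewrite !inE eqxx ?orbT)))
    (hch' z (ltac:(by rewrite !inE eqxx ?orbT))).
  move: hu' => /= /andP [hx /andP [hy _]].
  case/or3P => /eqP e.
  - by rewrite e inE eqxx in hx.
  - by rewrite e !inE eqxx orbT in hx.
  - by rewrite e inE eqxx in hy.
have hrc1 : F r c1 by rewrite -mem_children E inE eqxx.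
have hrc2 : F r c2 by rewrite -mem_children E !inE eqxx orbT.
have c12 : c1 != c2 by have := uniq_children r; rewrite E /= inE andbT.
move: (hrc1) (hrc2); rewrite !FP => /eqP hc1 /eqP hc2.
have hd : forall z, z \in Dsc c1 -> z \notin Dsc c2.
  move=> z; rewrite !mem_Dsc => h1; apply/negP => h2; exact: conn_disj hc1 hc2 c12 h1 h2.
have pc1 : c1 \in Dsc c1 by rewrite mem_Dsc connect0.
have pc2 : c2 \in Dsc c2 by rewrite mem_Dsc connect0.
have hsz : size (upf c1 (Dsc c1) ++ upf c2 (Dsc c2)) <= #|T|.+1.
  apply: leq_trans (leqnSn _); apply: leq_trans (uniq_size_card (Dsc_uniq hc1 hc2 c12)).
  by rewrite !size_cat; apply: leq_add; rewrite [X in X <= _]size_filter; apply: count_size.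
have hmem : upf c1 (Dsc c1) ++ upf c2 (Dsc c2) =i Dsc c1 ++ Dsc c2.
  move=> z; rewrite !mem_cat !mem_upf.
  by case: (boolP (z \in Dsc c1)) => [/Dsc_min ->|_] //=; case: (boolP (z \in Dsc c2)) => [/Dsc_min ->|_].
have hin : forall c z, (c == a) || (c == b) -> connect F c z -> z \in Dsc c1 ++ Dsc c2.
  move=> c z hc hcz; rewrite mem_cat !mem_Dsc.
  by case/orP: (hab c hc) => /eqP <-; rewrite hcz ?orbT.
have hs : is_succ (upf c1 (Dsc c1) ++ upf c2 (Dsc c2)) u v.
  rewrite (is_succ_mem _ _ hmem); apply/is_succP; split => //.
  - by apply: (hin a) => //; rewrite eqxx.
  - by apply: (hin b) => //; rewrite eqxx orbT.
  move=> z; rewrite mem_cat => /orP [] hz; apply: hmin.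
    exact: htr hrc1 hz.
  exact: htr hrc2 hz.
have hs1 : forall x y, is_succ (Dsc c1) x y -> F x y by move=> x y; apply: Dsc_succ; rewrite hc1.
have hs2 : forall x y, is_succ (Dsc c2) x y -> F x y by move=> x y; apply: Dsc_succ; rewrite hc2.
have := mc_ok (fun x w hx hg => Dsc_closed hx hg) (fun x w hx hg => Dsc_closed hx hg)
  hs1 hs2 hd pc1 pc2 hsz hs.
case/orP => [h|h]; first by rewrite -FP h. apply/orP; right.
apply/flatten_mapP; exists r; first by rewrite mem_filter is_rootP hr eqxx mem_enum.
by rewrite E.
Qed.


Lemma stage0 (R0 : seq T) : perm_eq R0 [seq r <- enum T | is_root F r] ->
  WInv (merge_subtrees A F) [seq (r, tree r) | r <- R0].
Proof.
move=> hR0.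
have memR0 : forall r, (r \in R0) = (par r == None).
  by move=> r; rewrite (perm_mem hR0) mem_filter mem_enum andbT is_rootP.
have uR0 : uniq R0 by rewrite (perm_uniq hR0) filter_uniq ?enum_uniq.
have hsnd : map snd [seq (r, tree r) | r <- R0] = [seq tree r | r <- R0] by rewrite -map_comp.
have samet : forall u v, rt u = rt v -> samebl [seq (r, tree r) | r <- R0] u v.
  move=> u v e; apply/hasP; exists (rt u, tree (rt u)).
    by apply: (map_f (fun r => (r, tree r))); rewrite memR0 rt_root.
  by rewrite /= !mem_tree e eqxx.
split.
- split.
  + move=> rb /mapP [r hr ->] /=; have hr' : par r = None by apply/eqP; rewrite -memR0.
    split; first by rewrite mem_tree rt_of_root.
    by move=> z; rewrite mem_tree => /eqP <-; apply: rt_le.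
  + by rewrite hsnd; apply: uniq_trees.
  + move=> x; rewrite hsnd; apply/flatten_mapP; exists (rt x); first by rewrite memR0 rt_root.
    by rewrite mem_tree.
- move=> u v; rewrite X0E /add_arcs => /orP [h|/mcarcs_ok [h1 h2]].
    split; first exact: Hpar (eqP h).
    by apply: samet; apply: esym; apply: rt_par (eqP h).
  by split => //; apply: samet.
- move=> u v /hasP [rb /mapP [r hr ->] /= hs]; apply: (@succ_tree r) => //.
  by apply/eqP; rewrite -memR0.
Qed.

End Forest.

End Basic.

Lemma map_fst_pair (T U : Type) (f : T -> U) (s : seq T) : map fst [seq (r, f r) | r <- s] = s.
Proof. by elim: s => //= x s ->. Qed.

Section Cycle.
Variables (R : realDomainType) (n : nat) (A : 'I_n -> R).

Local Notation G := (corr_graph A 1).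

Lemma corr_lt i j : G i j -> (A i < A j)%R.
Proof. by case/and3P. Qed.

Lemma modSP (x y : nat) : x < n -> (x + 1) %% n = y ->
  (x.+1 = n /\ y = 0) \/ (x.+1 < n /\ y = x.+1).
Proof.
move=> hx; case: (eqVneq x.+1 n) => [e|ne].
  by rewrite addn1 e modnn => <-; left.
rewrite addn1 modn_small => [<-|]; [right | ]; lia.
Qed.

Lemma adjP i j : G i j ->
  ((i.+1 = n /\ (j : nat) = 0) \/ (i.+1 < n /\ (j : nat) = i.+1)) \/
  ((j.+1 = n /\ (i : nat) = 0) \/ (j.+1 < n /\ (i : nat) = j.+1)).
Proof.
case/and3P => _ _ /existsP [k]; rewrite (ord1 k) /= => /orP [/eqP h|/eqP h].
  by left; apply: modSP.
by right; apply: modSP.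
Qed.

Lemma cyc_deg1 u c1 c2 w : G u c1 -> G u c2 -> G w u -> c1 = c2.
Proof.
move=> h1 h2 h3; apply: val_inj => /=.
have d1 : (w : nat) <> c1.
  by move=> e; move: (lt_trans (corr_lt h3) (corr_lt h1)); rewrite (val_inj e) ltxx.
have d2 : (w : nat) <> c2.
  by move=> e; move: (lt_trans (corr_lt h3) (corr_lt h2)); rewrite (val_inj e) ltxx.
have := adjP h1; have := adjP h2; have := adjP h3.
have := ltn_ord u; have := ltn_ord c1; have := ltn_ord c2; have := ltn_ord w; lia.
Qed.

Lemma cyc_deg2 u c1 c2 c3 : G u c1 -> G u c2 -> G u c3 -> [|| c1 == c2, c1 == c3 | c2 == c3].
Proof.
move=> h1 h2 h3; apply/negPn/negP; rewrite !negb_or => /and3P [/eqP d12 /eqP d13 /eqP d23].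
have e12 : (c1 : nat) <> c2 by move/val_inj.
have e13 : (c1 : nat) <> c3 by move/val_inj.
have e23 : (c2 : nat) <> c3 by move/val_inj.
have := adjP h1; have := adjP h2; have := adjP h3.
have := ltn_ord u; have := ltn_ord c1; have := ltn_ord c2; have := ltn_ord c3; lia.
Qed.

End Cycle.

Theorem theorem11 (R : realType) (n : nat) (A : 'I_n -> R) (L R0 : seq 'I_n) :
  injective A ->
  perm_eq L (enum 'I_n) ->
  perm_eq R0 [seq r <- enum 'I_n | is_root (dfs_forest A (corr_graph A 1) L) r] ->
  exists i : nat, exists s : seq 'I_n,
    let Fi := (iter_state A (merge_subtrees A (dfs_forest A (corr_graph A 1) L)) R0 i.+1).1 in
    is_ham_path_graph Fi s /\
    (forall t : seq 'I_n, is_topsort Fi t <-> t = sort_by_val A (enum 'I_n)).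
Proof.
move=> Ainj hL hR0.
pose par := dfs_parent A (corr_graph A 1) L.
have Hpar : forall v u, par v = Some u -> (A u < A v)%R.
  by move=> v u h; apply: corr_lt; apply: (dfs_par_arc h).
have Hdeg1 : forall u c1 c2, par c1 = Some u -> par c2 = Some u -> par u != None -> c1 = c2.
  move=> u c1 c2 h1 h2; case E: (par u) => [w|] // _.
  exact: cyc_deg1 (dfs_par_arc h1) (dfs_par_arc h2) (dfs_par_arc E).
have Hdeg2 : forall u c1 c2 c3, par c1 = Some u -> par c2 = Some u -> par c3 = Some u ->
    [|| c1 == c2, c1 == c3 | c2 == c3].
  move=> u c1 c2 c3 h1 h2 h3.
  exact: cyc_deg2 (dfs_par_arc h1) (dfs_par_arc h2) (dfs_par_arc h3).
have W0 := stage0 Ainj Hpar Hdeg1 Hdeg2 hR0.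
have [bs [h1 h2 h3]] := iter_ok Ainj W0 (size R0).
rewrite map_fst_pair in h1 h2.
exists (size R0), (sort_by_val A (enum 'I_n)).
have hs : size bs <= 1.
  move: h3; rewrite size_map; move: (size R0) => m h; apply: (leq_trans h).
  by have -> : m - m.+1 = 0 by apply/eqP; rewrite subn_eq0.
exact: (final_ok Ainj h1 hs).
Qed.
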